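(* Let $\mathsf{L}\in\{\mathbf{PD},\mathsf{InqL},\mathbf{PT}\}$. For all formulas $\phi,\psi$ in the language of $\mathsf{L}$ and every flat substitution $\sigma$ of $\mathsf{L}$: if $\phi\vdash_{\mathsf L}\psi$ then $\sigma(\phi)\vdash_{\mathsf L}\sigma(\psi)$. In particular, $\phi\equiv\psi$ implies $\sigma(\phi)\equiv\sigma(\psi)$ for every flat substitution $\sigma$.
   Context: Fix a countably infinite set Prop of propositional variables. A valuation is a function $v:\mathrm{Prop}\to\{0,1\}$; a team is a set of valuations. Formulas of $\mathbf{PT}$: $\phi::=p\mid\bot\mid\top\mid\,=\!(\phi_1,\dots,\phi_n,\phi)\mid\neg\phi\mid\phi\wedge\phi\mid\phi\otimes\phi\mid\phi\vee\phi\mid\phi\to\phi$. Satisfaction on a team $X$: $X\models p$ iff $v(p)=1$ for all $v\in X$; $X\models\bot$ iff $X=\emptyset$; $X\models\top$ always; $\wedge$ is conjunction of conditions; $X\models\phi\otimes\psi$ iff $X=Y\cup Z$ with $Y\models\phi$, $Z\models\psi$; $X\models\phi\vee\psi$ iff $X\models\phi$ or $X\models\psi$; $X\models\phi\to\psi$ iff every $Y\subseteq X$ with $Y\models\phi$ satisfies $\psi$; $X\models\neg\phi$ iff $\{v\}\not\models\phi$ for all $v\in X$; $X\models\,=\!(\phi_1,\dots,\phi_n,\psi)$ iff $X\models\bigwedge_i(\phi_i\vee(\phi_i\to\bot))\to(\psi\vee(\psi\to\bot))$. $\phi$ is flat if for all teams $X$: $X\models\phi$ iff $\{v\}\models\phi$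 for all $v\in X$. Formulas of $\mathbf{PD}$: $\phi::=p\mid\bot\mid\top\mid\,=\!(\vec\alpha,\beta)\mid\neg\phi\mid\phi\wedge\phi\mid\phi\otimes\phi$ with $\vec\alpha,\beta$ flat, evaluated by the same clauses (for flat arguments: $X\models\,=\!(\vec\alpha,\beta)$ iff any $v,v'\in X$ agreeing on the truth of each $\alpha_i$ on singletons also agree on the truth of $\beta$). $\mathsf{InqL}$: formulas built from $p,\bot,\top$ by $\wedge,\vee,\to$ with the same clauses. For finite $\Gamma$, $\Gamma\vdash_{\mathsf L}\phi$ iff all formulas are in the language of $\mathsf L$ and every team satisfying all of $\Gamma$ satisfies $\phi$. $\phi\equiv\psi$ means $\phi$ and $\psi$ are satisfied by exactly the same teams. A substitution of $\mathsf L$ is a map on $\mathsf L$-formulas commuting with all connectives and atoms (including $\neg$ and $=\!(\cdot)$); it is flat if each $\sigma(p)$ is flat. *)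

(* Defs.v *)
From Stdlib Require Import List.
Import ListNotations.

(* Prop = nat (a countably infinite set of propositional variables). *)
Definition valuation := nat -> bool.
Definition team := valuation -> Prop.

Definition subteam (Y X : team) : Prop := forall v, Y v -> X v.
Definition empty_team (X : team) : Prop := forall v, ~ X v.
Definition singleton (v : valuation) : team := fun w => w = v.

(* Formulas of PT. Dep [phi_1;...;phi_n] phi is  =(phi_1,...,phi_n,phi). *)
Inductive form : Type :=
| Atom (p : nat)
| Bot
| Top
| Dep (args : list form) (f : form)
| Neg (f : form)
| And (f g : form)
| Tens (f g : form)
| Or (f g : form)
| Imp (f g : form).

Fixpoint sat (f : form) (X : team) {struct f} : Prop :=
  match f with
  | Atom p => forall v, X v -> v p = true
  | Bot => empty_team X
  | Top => True
  | Dep args g =>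
      (* X |= /\_i (phi_i \/ (phi_i -> bot)) -> (g \/ (g -> bot)) *)
      forall Y, subteam Y X ->
        (let fix all_sat (l : list form) : Prop :=
             match l with
             | [] => True
             | h :: t =>
                 (sat h Y \/ (forall Z, subteam Z Y -> sat h Z -> empty_team Z))
                 /\ all_sat t
             end in all_sat args) ->
        (sat g Y \/ (forall Z, subteam Z Y -> sat g Z -> empty_team Z))
  | Neg g => forall v, X v -> ~ sat g (singleton v)
  | And g h => sat g X /\ sat h X
  | Tens g h => exists Y Z, (forall v, X v <-> (Y v \/ Z v)) /\ sat g Y /\ sat h Z
  | Or g h => sat g X \/ sat h X
  | Imp g h => forall Y, subteam Y X -> sat g Y -> sat h Y
  end.

Definition flat (f : form) : Prop :=
  forall X, sat f X <-> (forall v, X v -> sat f (singleton v)).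

Inductive logic : Type := PD | InqL | PT.

Fixpoint inPD (f : form) : Prop :=
  match f with
  | Atom _ | Bot | Top => True
  | Dep args g =>
      (let fix all_in (l : list form) : Prop :=
           match l with
           | [] => True
           | h :: t => (inPD h /\ flat h) /\ all_in t
           end in all_in args) /\ inPD g /\ flat g
  | Neg g => inPD g
  | And g h | Tens g h => inPD g /\ inPD h
  | Or _ _ | Imp _ _ => False
  end.

Fixpoint inInqL (f : form) : Prop :=
  match f with
  | Atom _ | Bot | Top => True
  | And g h | Or g h | Imp g h => inInqL g /\ inInqL h
  | Dep _ _ | Neg _ | Tens _ _ => False
  end.

Definition inL (L : logic) (f : form) : Prop :=
  match L with
  | PD => inPD f
  | InqL => inInqL f
  | PT => True
  end.

Fixpoint subst (s : nat -> form) (f : form) : form :=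
  match f with
  | Atom p => s p
  | Bot => Bot
  | Top => Top
  | Dep args g => Dep (map (subst s) args) (subst s g)
  | Neg g => Neg (subst s g)
  | And g h => And (subst s g) (subst s h)
  | Tens g h => Tens (subst s g) (subst s h)
  | Or g h => Or (subst s g) (subst s h)
  | Imp g h => Imp (subst s g) (subst s h)
  end.

Definition subst_of (L : logic) (s : nat -> form) : Prop := forall p, inL L (s p).
Definition flat_subst (s : nat -> form) : Prop := forall p, flat (s p).

Definition entails (L : logic) (Gamma : list form) (phi : form) : Prop :=
  (forall g, In g Gamma -> inL L g) /\ inL L phi /\
  (forall X : team, (forall g, In g Gamma -> sat g X) -> sat phi X).

Definition equiv (phi psi : form) : Prop := forall X : team, sat phi X <-> sat psi X.

(* Main.v *)
Require Import Defs.
From Stdlib Require Import List.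
From Stdlib Require Import ClassicalEpsilon FunctionalExtensionality PropExtensionality.
Import ListNotations.

Section Ind.
Variable P : form -> Prop.
Hypothesis HA : forall p, P (Atom p).
Hypothesis HB : P Bot.
Hypothesis HT : P Top.
Hypothesis HD : forall args g, Forall P args -> P g -> P (Dep args g).
Hypothesis HN : forall g, P g -> P (Neg g).
Hypothesis HAnd : forall g h, P g -> P h -> P (And g h).
Hypothesis HTe : forall g h, P g -> P h -> P (Tens g h).
Hypothesis HO : forall g h, P g -> P h -> P (Or g h).
Hypothesis HI : forall g h, P g -> P h -> P (Imp g h).
Fixpoint form_ind2 (f : form) : P f :=
  match f with
  | Atom p => HA p
  | Bot => HB
  | Top => HT
  | Dep args g => HD args g
      ((fix go (l : list form) : Forall P l :=
         match l with [] => Forall_nil _ | h :: t => Forall_cons _ (form_ind2 h) (go t) end) args)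
      (form_ind2 g)
  | Neg g => HN g (form_ind2 g)
  | And g h => HAnd g h (form_ind2 g) (form_ind2 h)
  | Tens g h => HTe g h (form_ind2 g) (form_ind2 h)
  | Or g h => HO g h (form_ind2 g) (form_ind2 h)
  | Imp g h => HI g h (form_ind2 g) (form_ind2 h)
  end.
End Ind.

Definition cond h (Y : team) := sat h Y \/ (forall Z, subteam Z Y -> sat h Z -> empty_team Z).
Definition allc (Y : team) := fix all_sat (l : list form) : Prop :=
  match l with
  | [] => True
  | h :: t => (sat h Y \/ (forall Z, subteam Z Y -> sat h Z -> empty_team Z)) /\ all_sat t
  end.

Lemma sat_Dep args g X : sat (Dep args g) X <-> forall Y, subteam Y X -> allc Y args -> cond g Y.
Proof. simpl. unfold cond, allc. tauto. Qed.

Lemma team_ext (X Y : team) : (forall v, X v <-> Y v) -> X = Y.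
Proof. intros H. apply functional_extensionality; intros v. apply propositional_extensionality. apply H. Qed.

Section Sub.
Variable s : nat -> form.
Hypothesis Hfl : forall p, flat (s p).

Definition fv (v : valuation) : valuation := fun p =>
  if excluded_middle_informative (sat (s p) (singleton v)) then true else false.

Lemma fv_true v p : fv v p = true <-> sat (s p) (singleton v).
Proof. unfold fv. destruct excluded_middle_informative; split; congruence || tauto. Qed.

Definition img (X : team) : team := fun w => exists v, X v /\ w = fv v.
Definition pre (X : team) (Y : team) : team := fun v => X v /\ Y (fv v).

Lemma img_pre X Y : subteam Y (img X) -> img (pre X Y) = Y.
Proof.
  intros H; apply team_ext; intros w; split.
  - intros [v [[_ Hv] ->]]; exact Hv.
  - intros Hw. destruct (H w Hw) as [v [Xv ->]]. exists v; split; [split|]; auto.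
Qed.

Lemma img_sub Y X : subteam Y X -> subteam (img Y) (img X).
Proof. intros H w [v [Yv ->]]; exists v; auto. Qed.

Lemma pre_sub X Y : subteam (pre X Y) X.
Proof. intros v [H _]; exact H. Qed.

Lemma img_empty X : empty_team X <-> empty_team (img X).
Proof.
  split.
  - intros H w [v [Xv _]]; exact (H v Xv).
  - intros H v Xv. apply (H (fv v)). exists v; auto.
Qed.

Lemma img_single v : img (singleton v) = singleton (fv v).
Proof.
  apply team_ext; intros w; split.
  - intros [u [-> ->]]; reflexivity.
  - intros ->; exists v; split; reflexivity.
Qed.

Lemma transfer (A B A' B' : team -> Prop)
  (HAx : forall Z, A Z <-> A' (img Z)) (HBx : forall Z, B Z <-> B' (img Z)) X :
  (forall Z, subteam Z X -> A Z -> B Z) <-> (forall Z', subteam Z' (img X) -> A' Z' -> B' Z').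
Proof.
  split.
  - intros H Z' HZ' HA'. rewrite <- (img_pre X Z' HZ') in HA' |- *.
    apply HBx. apply H. apply pre_sub. apply HAx. exact HA'.
  - intros H Z HZ HAZ. apply HBx. apply H. apply img_sub; auto. apply HAx; auto.
Qed.

Lemma cond_transfer h (IH : forall X, sat (subst s h) X <-> sat h (img X)) Y :
  cond (subst s h) Y <-> cond h (img Y).
Proof.
  unfold cond. rewrite IH.
  rewrite (transfer (sat (subst s h)) empty_team (sat h) empty_team IH img_empty Y).
  tauto.
Qed.

Lemma main f : forall X, sat (subst s f) X <-> sat f (img X).
Proof.
  induction f using form_ind2; intros X.
  - simpl. rewrite (Hfl p X). split.
    + intros H w [v [Xv ->]]. apply fv_true. auto.
    + intros H v Xv. apply fv_true. apply H. exists v; auto.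
  - simpl. apply img_empty.
  - simpl. tauto.
  - simpl (subst s (Dep args f)). rewrite !sat_Dep.
    apply transfer; [|intros Z; apply cond_transfer; exact IHf].
    intros Z. induction H as [|h t Hh Ht IHt]; simpl; [tauto|].
    pose proof (cond_transfer h Hh Z) as E. unfold cond in E. rewrite E, IHt. tauto.
  - simpl. split.
    + intros H w [v [Xv ->]]. rewrite <- img_single, <- IHf. auto.
    + intros H v Xv. rewrite IHf, img_single. apply H. exists v; auto.
  - simpl. rewrite IHf1, IHf2. tauto.
  - simpl. split.
    + intros [Y [Z [E [H1 H2]]]]. exists (img Y), (img Z).
      split; [|rewrite <- IHf1, <- IHf2; auto].
      intros w; split.
      * intros [v [Xv ->]]. apply E in Xv as [Yv|Zv]; [left|right]; exists v; auto.
      * intros [[v [Yv ->]]|[v [Zv ->]]]; exists v; split; auto; apply E; auto.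
    + intros [Y' [Z' [E [H1 H2]]]].
      assert (SY : subteam Y' (img X)) by (intros w Hw; apply E; auto).
      assert (SZ : subteam Z' (img X)) by (intros w Hw; apply E; auto).
      exists (pre X Y'), (pre X Z'). split.
      * intros v; split.
        -- intros Xv. assert (img X (fv v)) as Hi by (exists v; auto).
           apply E in Hi as [?|?]; [left|right]; split; auto.
        -- intros [[? _]|[? _]]; auto.
      * rewrite IHf1, IHf2, !img_pre; auto.
  - simpl. rewrite IHf1, IHf2. tauto.
  - simpl. apply transfer; auto.
Qed.

Lemma flat_subst_pres h : flat h -> flat (subst s h).
Proof.
  unfold flat in *. intros Hh X. rewrite main, Hh. split.
  - intros H v Xv. rewrite main, img_single. apply H. exists v; auto.
  - intros H w [v [Xv ->]]. rewrite <- img_single, <- main. auto.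
Qed.

Lemma inL_subst L f : (forall p, inL L (s p)) -> inL L f -> inL L (subst s f).
Proof.
  intros Hs. destruct L; simpl in *.
  - induction f using form_ind2; simpl; intros Hf; try tauto.
    + apply Hs.
    + destruct Hf as [Ha [Hg Hgf]]. split; [|split; auto; apply flat_subst_pres; auto].
      clear Hg Hgf IHf. induction H; simpl in *; auto.
      destruct Ha as [[A B] C]. split; [split; [auto | apply flat_subst_pres; auto] | exact (IHForall C)].
  - induction f using form_ind2; simpl; intros Hf; try tauto. apply Hs.
  - auto.
Qed.

End Sub.

Theorem theorem3p7 :
  forall (L : logic) (phi psi : form) (s : nat -> form),
    inL L phi -> inL L psi -> subst_of L s -> flat_subst s ->
    (entails L [phi] psi -> entails L [subst s phi] (subst s psi)) /\
    (equiv phi psi -> equiv (subst s phi) (subst s psi)).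
Proof.
  intros L phi psi s Hphi Hpsi Hs Hfl. split.
  - intros [_ [_ H]]. split; [|split].
    + intros g [<-|[]]. apply inL_subst; auto.
    + apply inL_subst; auto.
    + intros X HX. rewrite (main s Hfl). apply H.
      intros g [<-|[]]. rewrite <- (main s Hfl). apply HX. left; auto.
  - intros H X. rewrite !(main s Hfl). apply H.
Qed.
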